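(* Let $R$ be a Noetherian ring, let $N=Ry_1+\cdots+Ry_n$ be an $R$-module, and let $x,y\in N$. Write $Y_i=N/Ry_i$ and $Y=N/Ry$. (1) If $\operatorname{ht}(N^*(x)/Y^*(x))>1$, then $N^*(y)\subseteq\sqrt{N^*(x)}$. (2) If $\operatorname{ht}(N^*(x)/Y_i^*(x))>1$ for $1\le i\le n$, then $\sqrt{\operatorname{tr}(N)}=\sqrt{N^*(x)}$. In particular $\operatorname{ht}(\operatorname{tr}(N))\le\mu(N^* )$, unless $\operatorname{tr}(N)=R$.
   Context: For an $R$-module $X$ and $z\in X$, $X^*(z)=\{f(z)\mid f\in\operatorname{Hom}_R(X,R)\}$; $Y^*(x)$ denotes the order ideal of the image of $x$ in $Y$ (which is contained in $N^*(x)$). For ideals $I\subseteq J$, $\operatorname{ht}(J/I)$ is the height of $J/I$ in $R/I$. $\operatorname{tr}(N)=\sum_{z\in N}N^*(z)$ is the trace ideal; $N^*=\operatorname{Hom}_R(N,R)$ and $\mu$ is the minimal number of generators. *)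

(* Defs.v *)
From mathcomp Require Import all_boot all_order all_algebra.
Set Implicit Arguments. Unset Strict Implicit. Unset Printing Implicit Defensive.
Import GRing.Theory.
Local Open Scope ring_scope.

Section CommAlg.
Variable R : comNzRingType.

Definition ideal (I : R -> Prop) : Prop :=
  [/\ I 0, (forall a b, I a -> I b -> I (a + b)) & (forall r a, I a -> I (r * a))].

Definition subid (I J : R -> Prop) : Prop := forall a, I a -> J a.

Definition fin_gen_ideal (I : R -> Prop) : Prop :=
  exists (k : nat) (g : 'I_k -> R),
    forall a, I a <-> exists r : 'I_k -> R, a = \sum_(i < k) r i * g i.

Definition noetherian : Prop := forall I, ideal I -> fin_gen_ideal I.

Definition prime_ideal (P : R -> Prop) : Prop :=
  [/\ ideal P, ~ P 1 & forall a b, P (a * b) -> P a \/ P b].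

Definition radical (I : R -> Prop) : R -> Prop := fun a => exists k : nat, I (a ^+ k).

Definition prime_chain (I P : R -> Prop) (k : nat) : Prop :=
  exists p : nat -> R -> Prop,
    [/\ forall i, (i <= k)%N -> prime_ideal (p i),
        subid I (p 0%N),
        forall i, (i < k)%N -> subid (p i) (p i.+1) /\ exists a, p i.+1 a /\ ~ p i a
      & forall a, p k a <-> P a].

(* ht(J/I) >= k, height of J/I in R/I: every prime of R/I containing J/I
   (= prime of R containing J) has height >= k in R/I. *)
Definition ht_ge (I J : R -> Prop) (k : nat) : Prop :=
  forall P, prime_ideal P -> subid J P -> prime_chain I P k.

Definition ht_le (I J : R -> Prop) (m : nat) : Prop := ~ ht_ge I J m.+1.

Definition zero_ideal : R -> Prop := fun a => a = 0.

Variable N : lmodType R.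

Definition dual_elt (f : N -> R) : Prop :=
  forall (r : R) (u v : N), f (r *: u + v) = r * f u + f v.

Definition order_ideal (z : N) : R -> Prop :=
  fun a => exists f, dual_elt f /\ a = f z.

(* (N/Ry)^*(x): Hom_R(N/Ry, R) = { f in N^dual | f y = 0 } *)
Definition order_ideal_quot (y x : N) : R -> Prop :=
  fun a => exists f, [/\ dual_elt f, f y = 0 & a = f x].

Definition trace_ideal : R -> Prop :=
  fun a => exists (k : nat) (f : 'I_k -> N -> R) (z : 'I_k -> N),
    (forall i, dual_elt (f i)) /\ a = \sum_(i < k) f i (z i).

Definition dual_gen_by (m : nat) : Prop :=
  exists g : 'I_m -> N -> R, (forall i, dual_elt (g i)) /\
    forall f, dual_elt f -> exists r : 'I_m -> R,
      forall z, f z = \sum_(i < m) r i * g i z.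

Definition is_mu_dual (m : nat) : Prop :=
  dual_gen_by m /\ forall k, (k < m)%N -> ~ dual_gen_by k.

End CommAlg.

(* Main.v *)
Require Import Defs.
From mathcomp Require Import all_boot all_order all_algebra.
From mathcomp Require Import ring zify.
From Stdlib Require Import Classical ClassicalEpsilon.
From Stdlib Require List.
Set Implicit Arguments. Unset Strict Implicit. Unset Printing Implicit Defensive.
Import GRing.Theory.
Local Open Scope ring_scope.

Lemma fchoice {A B : Type} (P : A -> B -> Prop) :
  (forall a, exists b, P a b) -> exists f : A -> B, forall a, P a (f a).
Proof.
move=> H; exists (fun a => proj1_sig (constructive_indefinite_description _ (H a))).
by move=> a; case: (constructive_indefinite_description _ (H a)).
Qed.

Section CA.
Variable R : comNzRingType.
Implicit Types I J K T P Q : R -> Prop.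

Lemma id0 I : ideal I -> I 0. Proof. by case. Qed.
Lemma idD I a b : ideal I -> I a -> I b -> I (a + b). Proof. by case=> _ H _; apply: H. Qed.
Lemma idM I r a : ideal I -> I a -> I (r * a). Proof. by case=> _ _ H; apply: H. Qed.
Lemma idMr I r a : ideal I -> I a -> I (a * r). Proof. by move=> iI Ia; rewrite mulrC; apply: idM. Qed.
Lemma idN I a : ideal I -> I a -> I (- a).
Proof. by move=> iI Ia; rewrite -mulN1r; apply: idM. Qed.
Lemma idB I a b : ideal I -> I a -> I b -> I (a - b).
Proof. by move=> iI Ia Ib; apply: idD => //; apply: idN. Qed.
Lemma id_sum I k (F : 'I_k -> R) : ideal I -> (forall i, I (F i)) -> I (\sum_(i < k) F i).
Proof. move=> iI H; apply: big_ind => //; [exact: id0 | move=> a b; exact: idD]. Qed.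
Lemma id_eq I a b : a = b -> I a -> I b. Proof. by move->. Qed.

Lemma prI P : prime_ideal P -> ideal P. Proof. by case. Qed.
Lemma pr1 P : prime_ideal P -> ~ P 1. Proof. by case. Qed.
Lemma prM P a b : prime_ideal P -> P (a * b) -> P a \/ P b. Proof. by case=> _ _; apply. Qed.
Lemma prNM P a b : prime_ideal P -> ~ P a -> ~ P b -> ~ P (a * b).
Proof. by move=> pP na nb /(prM pP) [] //. Qed.
Lemma prX P a k : prime_ideal P -> P (a ^+ k) -> P a.
Proof.
move=> pP; elim: k => [|k IH]; first by rewrite expr0 => /(pr1 pP).
by rewrite exprS => /(prM pP) [].
Qed.

Hypothesis noeth : noetherian R.

Lemma acc (c : nat -> R -> Prop) : (forall n, ideal (c n)) ->
  (forall n, subid (c n) (c n.+1)) -> exists n, subid (c n.+1) (c n).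
Proof.
move=> ic inc.
have mono : forall n m, (n <= m)%N -> subid (c n) (c m).
  move=> n m /subnK <-; elim: (m - n)%N => [|d IH] a Ha //.
  by rewrite addSn; apply: inc; apply: IH.
pose U a := exists n, c n a.
have iU : ideal U.
  split; first by exists 0%N; apply: id0.
  - move=> a b [n Ha] [m Hb]; exists (maxn n m); apply: idD => //.
      by apply: (mono n); [exact: leq_maxl|].
    by apply: (mono m); [exact: leq_maxr|].
  - by move=> r a [n Ha]; exists n; apply: idM.
have [k [g Hg]] := noeth iU.
have Ug : forall i, U (g i).
  move=> i; apply/Hg; exists (fun j => if j == i then 1 else 0).
  rewrite (bigD1 i) //= eqxx mul1r big1 ?addr0 // => j /negbTE ->; by rewrite mul0r.
have [m Hm] := @fchoice _ _ (fun i n => c n (g i)) Ug.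
exists (\max_(i < k) m i) => a Ha.
have [r ->] : exists r, a = \sum_(i < k) r i * g i by apply/Hg; exists (\max_(i < k) m i).+1.
apply: id_sum => // i; apply: idM => //; apply: (mono (m i)) => //.
exact: leq_bigmax.
Qed.

Lemma maxp (F : (R -> Prop) -> Prop) : (exists I, ideal I /\ F I) ->
  exists I, [/\ ideal I, F I & forall J, ideal J -> F J -> subid I J -> subid J I].
Proof.
move=> [I0 [iI0 FI0]]; apply: NNPP => Hn.
have H : forall S : {I | ideal I /\ F I}, exists S' : {I | ideal I /\ F I},
    subid (proj1_sig S) (proj1_sig S') /\ ~ subid (proj1_sig S') (proj1_sig S).
  move=> [I [iI FI]]; apply: NNPP => H1; apply: Hn; exists I; split => // J iJ FJ sIJ.
  apply: NNPP => nJI; apply: H1; by exists (exist _ J (conj iJ FJ)).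
have [nx Hnx] := fchoice H.
pose c n := proj1_sig (iter n nx (exist _ I0 (conj iI0 FI0))).
have ic : forall n, ideal (c n) by move=> n; exact: (proj1 (proj2_sig (iter n nx (exist _ I0 (conj iI0 FI0))))).
have inc : forall n, subid (c n) (c n.+1).
  by move=> n; rewrite /c iterS; exact: (proj1 (Hnx (iter n nx (exist _ I0 (conj iI0 FI0))))).
have [n Hn'] := acc ic inc.
move: Hn'; rewrite /c iterS.
exact: (proj2 (Hnx (iter n nx (exist _ I0 (conj iI0 FI0))))).
Qed.


Definition psat P I := forall s r, ~ P s -> I (s * r) -> I r.
Definition satI P I := fun r => exists s, ~ P s /\ I (s * r).
Definition addE I a := fun r => exists t c, I t /\ r = t + c * a.
Definition sumI I J := fun r => exists a b, [/\ I a, J b & r = a + b].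

Lemma satI_ideal P I : prime_ideal P -> ideal I -> ideal (satI P I).
Proof.
move=> pP iI; split.
- by exists 1; split; [exact: pr1|]; rewrite mulr0; apply: id0.
- move=> a b [s [nPs Ia]] [t [nPt Ib]]; exists (s * t); split; first exact: prNM.
  have -> : s * t * (a + b) = t * (s * a) + s * (t * b) by ring.
  by apply: idD => //; apply: idM.
- move=> r a [s [nPs Ia]]; exists s; split => //.
  by rewrite mulrCA; apply: idM.
Qed.
Lemma satI_psat P I : prime_ideal P -> psat P (satI P I).
Proof.
move=> pP s r nPs [t [nPt H]]; exists (t * s); split; first exact: prNM.
by rewrite -mulrA.
Qed.
Lemma satI_sub P I : prime_ideal P -> subid I (satI P I).
Proof. by move=> pP r Ir; exists 1; split; [exact: pr1| rewrite mul1r]. Qed.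
Lemma psat_satI P I : psat P I -> subid (satI P I) I.
Proof. by move=> ps r [s [nPs H]]; apply: ps H. Qed.
Lemma satI_mono P I J : subid I J -> subid (satI P I) (satI P J).
Proof. by move=> sIJ r [s [nPs H]]; exists s; split => //; apply: sIJ. Qed.

Lemma addE_ideal I a : ideal I -> ideal (addE I a).
Proof.
move=> iI; split.
- by exists 0, 0; split; [exact: id0| rewrite mul0r addr0].
- move=> x y [t [c [It ->]]] [t' [c' [It' ->]]]; exists (t + t'), (c + c'); split.
    exact: idD.
  ring.
- move=> r x [t [c [It ->]]]; exists (r * t), (r * c); split; first exact: idM.
  ring.
Qed.
Lemma addE_sub I a : ideal I -> subid I (addE I a).
Proof. by move=> iI r Ir; exists r, 0; split => //; rewrite mul0r addr0. Qed.
Lemma addE_a I a : ideal I -> addE I a a.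
Proof. by move=> iI; exists 0, 1; split; [exact: id0| rewrite mul1r add0r]. Qed.
Lemma addE_min I a T : ideal T -> subid I T -> T a -> subid (addE I a) T.
Proof. by move=> iT sIT Ta r [t [c [It ->]]]; apply: idD => //; [apply: sIT| apply: idM]. Qed.

Lemma sumI_ideal I J : ideal I -> ideal J -> ideal (sumI I J).
Proof.
move=> iI iJ; split.
- by exists 0, 0; split; [exact: id0|exact: id0| rewrite addr0].
- move=> x y [a [b [Ia Jb ->]]] [a' [b' [Ia' Jb' ->]]]; exists (a + a'), (b + b'); split.
  + exact: idD. + exact: idD. + ring.
- move=> r x [a [b [Ia Jb ->]]]; exists (r * a), (r * b); split.
  + exact: idM. + exact: idM. + ring.
Qed.

(* Nakayama, localized at P *)
Lemma nak P K M x : prime_ideal P -> P x -> ideal K -> ideal M ->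
  (forall m, M m -> exists s k mu, [/\ ~ P s, K k, M mu & s * m = k + x * mu]) ->
  forall m, M m -> satI P K m.
Proof.
move=> pP Px iK iM H m0 Mm0; apply: NNPP => nm0.
have [T [iT [psT sKT nMT] mT]] := @maxp (fun T => [/\ psat P T, subid K T & ~ subid M T])
  (ex_intro _ (satI P K) (conj (satI_ideal pP iK)
     (And3 (satI_psat (I := K) pP) (satI_sub pP) (fun h => nm0 (h m0 Mm0))))).
have [m Hm0] := not_all_ex_not _ _ nMT.
have [Mm nTm] := imply_to_and _ _ Hm0.
pose T2 := satI P (addE T m).
have iT2 : ideal T2 by apply: satI_ideal => //; apply: addE_ideal.
have sTT2 : subid T T2 by move=> r Tr; apply: satI_sub => //; apply: addE_sub.
have T2m : T2 m by apply: satI_sub => //; apply: addE_a.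
have MT2 : subid M T2.
  apply: NNPP => nMT2; apply: nTm; apply: (mT T2 iT2) => //; split => //.
  - exact: satI_psat.
  - by move=> r Kr; apply: sTT2; apply: sKT.
have [s0 [k [mu [nPs0 Kk Mmu Em]]]] := H m Mm.
have [s [nPs [t [c [Tt Est]]]]] := MT2 mu Mmu.
apply: nTm; apply: (psT (s * s0 - x * c)).
  move=> Pd; apply: (prNM pP nPs nPs0).
  have -> : s * s0 = (s * s0 - x * c) + x * c by ring.
  by apply: idD (prI pP) Pd _; apply: idMr (prI pP) Px.
have -> : (s * s0 - x * c) * m = s * k + x * t.
  have -> : (s * s0 - x * c) * m = s * (s0 * m) - x * (c * m) by ring.
  rewrite Em; have -> : x * (c * m) = x * (s * mu) - x * t by rewrite Est; ring.
  ring.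
apply: idD => //; apply: idM => //; exact: sKT.
Qed.


Definition FL P I := forall J : nat -> R -> Prop, (forall n, ideal (J n)) ->
  (forall n, psat P (J n)) -> (forall n, subid I (J n)) ->
  (forall n, subid (J n.+1) (J n)) ->
  exists N, forall n, (N <= n)%N -> subid (J n) (J n.+1).

Lemma desc_mono (J : nat -> R -> Prop) : (forall n, subid (J n.+1) (J n)) ->
  forall n m, (n <= m)%N -> subid (J m) (J n).
Proof.
move=> H n m /subnK <-; elim: (m - n)%N => [|d IH] a //.
by rewrite addSn => /H /IH.
Qed.

Lemma dcc P I0 : prime_ideal P -> ideal I0 ->
  (forall T, prime_ideal T -> subid I0 T -> subid T P -> subid P T) -> FL P I0.
Proof.
move=> pP iI0 minP; apply: NNPP => nFL0.
have nFLs : ~ FL P (satI P I0).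
  move=> H; apply: nFL0 => J iJ psJ sJ dJ; apply: H => // n r Hr.
  by apply: (psat_satI (psJ n)); apply: satI_mono Hr; apply: sJ.
have [I [iI [psI sI0I nFLI] mI]] :=
  @maxp (fun I => [/\ psat P I, subid I0 I & ~ FL P I])
  (ex_intro _ (satI P I0) (conj (satI_ideal pP iI0)
     (And3 (satI_psat (I := I0) pP) (satI_sub pP) nFLs))).
apply: nFLI.
case: (classic (I 1)) => [I1 | nI1].
  move=> J iJ psJ sJ dJ; exists 0%N => n _ r _.
  by rewrite -[r]mulr1; apply: idM => //; apply: sJ.
have IP : subid I P.
  by move=> r Ir; apply: NNPP => nPr; apply: nI1; apply: (psI r 1 nPr); rewrite mulr1.
(* associated prime *)
have i1 : ideal (fun a => I (a * 1)).
  split; [by rewrite mul0r; apply: id0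
         | by move=> a b Ha Hb; rewrite mulrDl; apply: idD
         | by move=> r a Ha; rewrite -mulrA; apply: idM].
have [A [iA [w [nIw HA]] mA]] :=
  @maxp (fun A => exists w, ~ I w /\ forall a, A a <-> I (a * w))
  (ex_intro _ (fun a => I (a * 1)) (conj i1
     (ex_intro _ 1 (conj nI1 (fun a => conj id id))))).
have pA : prime_ideal A.
  split => //; first by move/HA; rewrite mul1r.
  move=> a b /HA Hab; case: (classic (A a)) => [|nAa]; [by left|right].
  pose A' := fun r => I (r * (a * w)).
  have iA' : ideal A'.
    split; [by rewrite /A' mul0r; apply: id0
           | by move=> x y Hx Hy; rewrite /A' mulrDl; apply: idD
           | by move=> r x Hx; rewrite /A' -mulrA; apply: idM].
  have sAA' : subid A A'.
    move=> r /HA Hr; rewrite /A'; have -> : r * (a * w) = a * (r * w) by ring.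
    exact: idM.
  have GA' : exists w0, ~ I w0 /\ forall r, A' r <-> I (r * w0).
    exists (a * w); split; first by move=> H; apply: nAa; apply/HA.
    by move=> r.
  apply: (mA A' iA' GA' sAA').
  by rewrite /A'; have -> : b * (a * w) = a * b * w by ring.
have I0A : subid I0 A by move=> r /sI0I Ir; apply/HA; apply: idMr.
have AP : subid A P.
  move=> r /HA Hr; apply: NNPP => nPr; apply: nIw; exact: psI Hr.
have PwI : forall p, P p -> I (p * w) by move=> p /(minP A pA I0A AP) /HA.
pose I' := satI P (addE I w).
have iI' : ideal I' by apply: satI_ideal => //; apply: addE_ideal.
have sII' : subid I I' by move=> r Ir; apply: satI_sub => //; apply: addE_sub.
have I'w : I' w by apply: satI_sub => //; apply: addE_a.
have FLI' : FL P I'.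
  apply: NNPP => nF; apply: nIw; apply: (mI I' iI') => //.
  split => //; [exact: satI_psat | by move=> r /sI0I /sII'].
move=> J iJ psJ sJ dJ.
pose J' n := satI P (sumI (J n) I').
have iJ' : forall n, ideal (J' n).
  by move=> n; apply: satI_ideal => //; apply: sumI_ideal.
have psJ' : forall n, psat P (J' n) by move=> n; apply: satI_psat.
have sJ' : forall n, subid I' (J' n).
  move=> n r Hr; apply: satI_sub => //; exists 0, r; split => //; last by rewrite add0r.
  exact: id0.
have dJ' : forall n, subid (J' n.+1) (J' n).
  move=> n; apply: satI_mono => r [a [b [Ja Ib ->]]]; exists a, b; split => //.
  exact: dJ.
have [N1 HN1] := FLI' J' iJ' psJ' sJ' dJ'.
have key : forall n, (N1 <= n)%N -> forall r, J n r ->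
    exists s j i, [/\ ~ P s, J n.+1 j, I' i, J n i & s * r = j + i].
  move=> n Hn r Jr.
  have : J' n r by apply: satI_sub => //; exists r, 0; split => //; [exact: id0| rewrite addr0].
  move/(HN1 n Hn) => [s [nPs [j [i [Jj I'i Es]]]]].
  exists s, j, i; split => //.
  have -> : i = s * r - j by rewrite Es; ring.
  by apply: idB => //; [apply: idM | apply: dJ].
case: (classic (forall n, J n w)) => [Jw | nJw].
  exists N1 => n Hn r Jr.
  have [s [j [i [nPs Jj I'i _ Es]]]] := key n Hn r Jr.
  apply: (psJ n.+1 s) => //; rewrite Es; apply: idD => //.
  move: I'i => [s' [nPs' [t [c [It Et]]]]].
  apply: (psJ n.+1 s') => //; rewrite Et; apply: idD; [exact: iJ| exact: sJ| ].
  by apply: idM.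
have [n0 nJn0] := not_all_ex_not _ _ nJw.
exists (maxn N1 n0) => n Hn r Jr.
have HnN1 : (N1 <= n)%N by apply: leq_trans Hn; apply: leq_maxl.
have nJnw : ~ J n w.
  move=> Jnw; apply: nJn0; apply: (desc_mono dJ (n := n0) (m := n)) => //.
  by apply: leq_trans Hn; apply: leq_maxr.
have [s [j [i [nPs Jj I'i Jni Es]]]] := key n HnN1 r Jr.
apply: (psJ n.+1 s) => //; rewrite Es; apply: idD => //.
move: I'i => [s' [nPs' [t [c [It Et]]]]].
case: (classic (P c)) => [Pc | nPc].
  apply: sJ; apply: (psI s') => //; rewrite Et; apply: idD => //.
  exact: PwI.
exfalso; apply: nJnw; apply: (psJ n c) => //.
have -> : c * w = s' * i - t by rewrite Et; ring.
by apply: idB => //; [apply: idM | apply: sJ].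
Qed.


Lemma addE_mono I J a : subid I J -> subid (addE I a) (addE J a).
Proof. by move=> sIJ r [t [c [It ->]]]; exists t, c; split => //; apply: sIJ. Qed.

Lemma pit Q' Q P x : prime_ideal Q' -> prime_ideal Q -> prime_ideal P ->
  subid Q' Q -> (exists q, Q q /\ ~ Q' q) -> subid Q P -> (exists p, P p /\ ~ Q p) ->
  P x -> (forall T, prime_ideal T -> subid Q' T -> T x -> subid T P -> subid P T) -> False.
Proof.
move=> pQ' pQ pP sQ'Q [q [Qq nQ'q]] sQP [p [Pp nQp]] Px minP.
have iQ' := prI pQ'; have iQ := prI pQ; have iP := prI pP.
have nQx : ~ Q x by move=> Qx; apply: nQp; apply: (minP Q pQ sQ'Q Qx sQP).
pose D n := satI Q (addE Q' (q ^+ n)).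
have iD : forall n, ideal (D n) by move=> n; apply: satI_ideal => //; apply: addE_ideal.
have psD : forall n, psat Q (D n) by move=> n; apply: satI_psat.
have sQ'D : forall n, subid Q' (D n).
  by move=> n r Hr; apply: satI_sub => //; apply: addE_sub.
have dD : forall n, subid (D n.+1) (D n).
  move=> n; apply: satI_mono => r [t [c [Tt ->]]]; exists t, (c * q); split => //.
  by rewrite exprS mulrA.
pose I0 := addE Q' x.
have iI0 : ideal I0 by apply: addE_ideal.
have minI0 : forall T, prime_ideal T -> subid I0 T -> subid T P -> subid P T.
  move=> T pT sI0T sTP; apply: minP => //.
    by move=> r Hr; apply: sI0T; apply: addE_sub.
  by apply: sI0T; apply: addE_a.
pose J n := satI P (addE (D n) x).
have iJ : forall n, ideal (J n) by move=> n; apply: satI_ideal => //; apply: addE_ideal.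
have psJ : forall n, psat P (J n) by move=> n; apply: satI_psat.
have sI0J : forall n, subid I0 (J n).
  by move=> n r Hr; apply: satI_sub => //; apply: (addE_mono (sQ'D n)).
have dJ : forall n, subid (J n.+1) (J n).
  by move=> n; apply: satI_mono; apply: addE_mono.
have [N HN] := dcc pP iI0 minI0 iJ psJ sI0J dJ.
have HJ := HN N (leqnn N).
have nakH : forall m, D N m -> exists s k mu,
    [/\ ~ P s, D N.+1 k, D N mu & s * m = k + x * mu].
  move=> m Dm.
  have : J N m by apply: satI_sub => //; apply: addE_sub.
  move/HJ => [s [nPs [d [c [Dd Es]]]]].
  exists s, d, c; split => //; last by rewrite Es mulrC.
  apply: (psD N x) => //.
  have -> : x * c = s * m - d by rewrite Es; ring.
  by apply: idB => //; [apply: idM | apply: dD].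
have := nak pP Px (iD N.+1) (iD N) nakH.
have DqN : D N (q ^+ N) by apply: satI_sub => //; apply: addE_a.
move=> /(_ _ DqN) [s [nPs H1]].
have nQs : ~ Q s by move=> Qs; apply: nPs; apply: sQP.
have := psD N.+1 s _ nQs H1 => -[t [nQt [e [c [Q'e Ee]]]]].
have : Q' ((t - c * q) * q ^+ N).
  have -> : (t - c * q) * q ^+ N = e by rewrite exprSr in Ee; rewrite mulrBl Ee; ring.
  exact: Q'e.
case/(prM pQ') => [H2 | H2].
  apply: nQt; have -> : t = (t - c * q) + c * q by ring.
  by apply: idD => //; [apply: sQ'Q | apply: idM].
by apply: nQ'q; apply: prX H2.
Qed.


Lemma lrad P J z : prime_ideal P -> ideal J ->
  (forall T, prime_ideal T -> subid J T -> subid T P -> subid P T) -> P z ->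
  exists s k, ~ P s /\ J (s * z ^+ k).
Proof.
move=> pP iJ minP Pz; apply: NNPP => Hn.
have H0 : forall s k, ~ P s -> ~ J (s * z ^+ k).
  by move=> s k nPs Js; apply: Hn; exists s, k.
have [T [iT [sJT HT] mT]] :=
  @maxp (fun T => subid J T /\ forall s k, ~ P s -> ~ T (s * z ^+ k))
  (ex_intro _ J (conj iJ (conj (fun r h => h) H0))).
have ext : forall a, ~ T a -> exists s k, ~ P s /\ addE T a (s * z ^+ k).
  move=> a nTa; apply: NNPP => Hn2; apply: nTa.
  apply: (mT (addE T a) (addE_ideal a iT)); last exact: addE_a.
  - split; first by move=> r /sJT; apply: addE_sub.
    by move=> s k nPs H; apply: Hn2; exists s, k.
  - exact: addE_sub.
have pT : prime_ideal T.
  split => //.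
    by move=> T1; apply: (HT 1 0%N (pr1 pP)); rewrite expr0 mulr1.
  move=> a b Tab; apply: NNPP => /not_or_and [nTa nTb].
  have [s1 [k1 [nP1 [t1 [c1 [Tt1 E1]]]]]] := ext a nTa.
  have [s2 [k2 [nP2 [t2 [c2 [Tt2 E2]]]]]] := ext b nTb.
  apply: (HT (s1 * s2) (k1 + k2)%N (prNM pP nP1 nP2)).
  have -> : s1 * s2 * z ^+ (k1 + k2) = (s1 * z ^+ k1) * (s2 * z ^+ k2).
    by rewrite exprD; ring.
  rewrite E1 E2.
  have -> : (t1 + c1 * a) * (t2 + c2 * b) =
     t1 * (t2 + c2 * b) + c1 * (a * t2) + c1 * c2 * (a * b) by ring.
  apply: idD => //; first apply: idD => //.
  - exact: idMr.
  - by apply: idM => //; apply: idM.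
  - exact: idM.
have sTP : subid T P.
  move=> r Tr; apply: NNPP => nPr; apply: (HT r 0%N nPr); by rewrite expr0 mulr1.
have Tz := minP T pT sJT sTP z Pz.
by apply: (HT 1 1%N (pr1 pP)); rewrite expr1 mul1r.
Qed.

Definition spanB B k (a : 'I_k -> R) :=
  fun r => exists be (c : 'I_k -> R), B be /\ r = be + \sum_(i < k) c i * a i.

Lemma spanB_min B k (a : 'I_k -> R) T : ideal T -> subid B T -> (forall i, T (a i)) ->
  subid (spanB B a) T.
Proof.
move=> iT sBT Ta r [be [c [Bb ->]]]; apply: idD => //; first exact: sBT.
by apply: id_sum => // i; apply: idM.
Qed.
Lemma spanB_B B k (a : 'I_k -> R) : subid B (spanB B a).
Proof.
move=> r Br; exists r, (fun _ => 0); split => //.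
by rewrite big1 ?addr0 // => i _; rewrite mul0r.
Qed.
Lemma spanB_a B k (a : 'I_k -> R) i : B 0 -> spanB B a (a i).
Proof.
move=> B0; exists 0, (fun j => if j == i then 1 else 0); split => //.
rewrite add0r (bigD1 i) //= eqxx mul1r big1 ?addr0 // => j /negbTE ->; by rewrite mul0r.
Qed.

Lemma chain_mono (p : nat -> R -> Prop) k :
  (forall i, (i < k)%N -> subid (p i) (p i.+1)) ->
  forall i j, (i <= j)%N -> (j <= k)%N -> subid (p i) (p j).
Proof.
move=> H i j Hij; rewrite -(subnK Hij); elim: (j - i)%N => [|d IH]; first by move=> _ r; rewrite add0n.
move=> Hk r Hr; rewrite addSn in Hk *; apply: H => //.
apply: IH => //; apply: leq_trans Hk; exact: leqnSn.
Qed.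

Lemma ght m : forall B (a : 'I_m -> R) P, ideal B -> prime_ideal P ->
  subid (spanB B a) P ->
  (forall T, prime_ideal T -> subid (spanB B a) T -> subid T P -> subid P T) ->
  ~ prime_chain B P m.+1.
Proof.
elim: m => [|m IH] B a P iB pP sP minP [p [pp sB0 st eP]].
  have [s01 [e [p1e np0e]]] := st 0%N isT.
  have sp0P : subid (p 0%N) P by move=> r /s01 /eP.
  have Hsp : subid (spanB B a) (p 0%N).
    apply: spanB_min; [exact: prI (pp 0%N isT) | exact: sB0 | by case].
  have HP := minP (p 0%N) (pp 0%N isT) Hsp sp0P.
  by apply: np0e; apply: HP; apply/eP; exact: p1e.
have mono := chain_mono (fun i Hi => proj1 (st i Hi)).
pose Q0 := p m.+1.
have [sQ0 [e [Pe nQ0e]]] := st m.+1 (leqnn _).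
have sQ0P : subid Q0 P by move=> r /sQ0 /eP.
have nPQ0 : ~ subid P Q0 by move=> H; apply: nQ0e; apply: H; apply/eP.
have [Q [iQ [pQ sQ0Q sQP nPQ] mQ]] :=
  @maxp (fun T => [/\ prime_ideal T, subid Q0 T, subid T P & ~ subid P T])
  (ex_intro _ Q0 (conj (prI (pp m.+1 (leqnSn _)))
     (And4 (pp m.+1 (leqnSn _)) (fun r h => h) sQ0P nPQ0))).
have BQ : subid B Q.
  by move=> r /sB0 /(mono 0%N m.+1 isT (leqnSn _)) /sQ0Q.
have [i0 nQai0] : exists i0, ~ Q (a i0).
  apply: NNPP => H; apply: nPQ; apply: minP => //; apply: spanB_min => // i.
  by apply: NNPP => nQ; apply: H; exists i.
have Pa : forall j, P (a j) by move=> j; apply: sP; apply: spanB_a; exact: id0.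
have minQa : forall T, prime_ideal T -> subid (addE Q (a i0)) T -> subid T P -> subid P T.
  move=> T pT sT sTP; apply: NNPP => nPT; apply: nQai0.
  have sQT : subid Q T by move=> r Qr; apply: sT; apply: addE_sub.
  apply: (mQ T (prI pT)) => //; last by apply: sT; apply: addE_a.
  by split => // r /sQ0Q /sQT.
have LR : forall j, exists sk : R * nat, ~ P sk.1 /\ addE Q (a i0) (sk.1 * a j ^+ sk.2).
  move=> j; have [s [k [nPs H]]] := lrad pP (addE_ideal (a i0) iQ) minQa (Pa j).
  by exists (s, k).
have [sk Hsk] := fchoice LR.
have LR2 : forall j, exists t, Q t /\ exists c, (sk j).1 * a j ^+ (sk j).2 = t + c * a i0.
  by move=> j; have [_ [t [c [Qt E]]]] := Hsk j; exists t; split => //; exists c.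
have [tt Htt] := fchoice LR2.
pose b := fun j' : 'I_m => tt (lift i0 j').
have claim1 : forall T, prime_ideal T -> subid (spanB B b) T -> T (a i0) ->
    subid T P -> subid P T.
  move=> T pT sbT Tai0 sTP; apply: minP => //; apply: spanB_min.
  - exact: prI pT.
  - by move=> r Br; apply: sbT; apply: spanB_B.
  move=> j; case: (eqVneq i0 j) => [<- // | ne].
  have [j' Ej _] := unlift_some ne.
  have [_ [c Ec]] := Htt j.
  have : T ((sk j).1 * a j ^+ (sk j).2).
    rewrite Ec; apply: idD; [exact: prI pT| |by apply: idM; [exact: prI pT|]].
    by apply: sbT; rewrite Ej; apply: (spanB_a b j'); exact: id0.
  case/(prM pT) => [Ts | /(prX pT) //].
  by exfalso; apply: (proj1 (Hsk j)); apply: sTP.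
have claim2 : forall T, prime_ideal T -> subid (spanB B b) T -> subid T Q -> subid Q T.
  move=> T pT sbT sTQ; apply: NNPP => nQT.
  have [q Hq] := not_all_ex_not _ _ nQT; have [Qq nTq] := imply_to_and _ _ Hq.
  have [p0 Hp0] := not_all_ex_not _ _ nPQ; have [Pp0 nQp0] := imply_to_and _ _ Hp0.
  apply: (pit pT pQ pP sTQ (ex_intro _ q (conj Qq nTq)) sQP
     (ex_intro _ p0 (conj Pp0 nQp0)) (Pa i0)).
  move=> T' pT' sTT' T'a sT'P; apply: claim1 => //.
  by move=> r /sbT /sTT'.
apply: (IH B b Q iB pQ _ claim2).
  apply: spanB_min => // j'; exact: (proj1 (Htt (lift i0 j'))).
exists (fun i => if (i <= m)%N then p i else Q); split.
- move=> i Hi; case: ifP => Him; last exact: pQ.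
  by apply: pp; apply: leq_trans Him _; apply: leqW; apply: leqW.
- by rewrite leq0n.
- move=> i Him; case: (ltngtP i m) => [ilt | igt | ->].
  + by apply: st; lia.
  + by exfalso; lia.
  + split.
      by move=> r /(mono m m.+1 (leqnSn _) (leqnSn _)) /sQ0Q.
    have [_ [e' [H1 H2]]] := st m (leqnSn m.+1).
    by exists e'; split => //; apply: sQ0Q.
- by move=> r; rewrite ltnn.
Qed.


Definition FDp I := exists l : list (R -> Prop),
  (forall q, List.In q l -> prime_ideal q /\ subid I q) /\
  forall r, (forall q, List.In q l -> q r) -> radical I r.

Lemma fd I0 : ideal I0 -> FDp I0.
Proof.
move=> iI0; apply: NNPP => nF0.
have [I [iI nFI mI]] := @maxp (fun I => ~ FDp I) (ex_intro _ I0 (conj iI0 nF0)).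
apply: nFI.
case: (classic (I 1)) => [I1 | nI1].
  exists nil; split => // r _; exists 0%N; by rewrite expr0.
case: (classic (prime_ideal I)) => [pI | npI].
  exists (cons I nil); split.
    by move=> q [<- | []]; split.
  by move=> r H; exists 1%N; rewrite expr1; apply: H; left.
have [a [b [Iab [nIa nIb]]]] : exists a b, I (a * b) /\ ~ I a /\ ~ I b.
  apply: NNPP => H; apply: npI; split => // a b Iab.
  apply: NNPP => /not_or_and [nIa nIb]; apply: H; by exists a, b.
have FDa : forall c, ~ I c -> FDp (addE I c).
  move=> c nIc; apply: NNPP => nF; apply: nIc.
  apply: (mI (addE I c) (addE_ideal c iI) nF (addE_sub c iI)); exact: addE_a.
have [la [Hla Rla]] := FDa a nIa.
have [lb [Hlb Rlb]] := FDa b nIb.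
exists (List.app la lb); split.
  move=> q Hq; case: (List.in_app_or _ _ _ Hq) => [/Hla | /Hlb] [pq sq];
    split => // r Ir; apply: sq; exact: addE_sub.
move=> r H.
have [k [t1 [c1 [It1 E1]]]] := Rla r (fun q Hq => H q (List.in_or_app _ _ _ (or_introl Hq))).
have [l [t2 [c2 [It2 E2]]]] := Rlb r (fun q Hq => H q (List.in_or_app _ _ _ (or_intror Hq))).
exists (k + l)%N; rewrite exprD E1 E2.
have -> : (t1 + c1 * a) * (t2 + c2 * b) =
     t1 * (t2 + c2 * b) + c1 * (a * t2) + c1 * c2 * (a * b) by ring.
apply: idD => //; first apply: idD => //.
- exact: idMr.
- by apply: idM => //; apply: idM.
- exact: idM.
Qed.

Lemma list_elt (l : list (R -> Prop)) P : prime_ideal P ->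
  (forall q, List.In q l -> ideal q) ->
  (forall q, List.In q l -> exists a, q a /\ ~ P a) ->
  exists a, (forall q, List.In q l -> q a) /\ ~ P a.
Proof.
move=> pP; elim: l => [|h t IH] iq Hq.
  by exists 1; split => //; exact: pr1.
have [a [ha nPa]] := Hq h (or_introl erefl).
have [b [tb nPb]] := IH (fun q H => iq q (or_intror H)) (fun q H => Hq q (or_intror H)).
exists (a * b); split; last exact: prNM.
move=> q [<- | Hin]; first by apply: idMr => //; apply: iq; left.
by apply: idM => //; [apply: iq; right | apply: tb].
Qed.

Lemma fd_below I (l : list (R -> Prop)) P :
  (forall q, List.In q l -> prime_ideal q /\ subid I q) ->
  (forall r, (forall q, List.In q l -> q r) -> radical I r) ->
  prime_ideal P -> subid I P -> exists q, List.In q l /\ subid q P.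
Proof.
move=> Hl Rl pP sIP; apply: NNPP => H.
have [a [Ha nPa]] : exists a, (forall q, List.In q l -> q a) /\ ~ P a.
  apply: list_elt => // [q /Hl [/prI] //|q Hq].
  apply: NNPP => H2; apply: H; exists q; split => // r qr.
  by apply: NNPP => nPr; apply: H2; exists r.
have [k Ik] := Rl a Ha; by apply: nPa; apply: prX pP (sIP _ Ik).
Qed.

Lemma list_min (l : list (R -> Prop)) P : (exists q, List.In q l /\ subid q P) ->
  exists q, [/\ List.In q l, subid q P &
    forall q', List.In q' l -> subid q' q -> subid q q'].
Proof.
elim: l => [|h t IH]; first by case=> q [[]].
move=> Hex; case: (classic (exists q, List.In q t /\ subid q P)) => [Ht | nHt].
  have [q [qt qP qmin]] := IH Ht.
  case: (classic (subid h q)) => [hq | nhq].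
    exists h; split; [by left | by move=> r /hq /qP |].
    move=> q' [<- // | q't] q'h r hr.
    by apply: (qmin q' q't) => //; [move=> x /q'h /hq | apply: hq].
  exists q; split; [by right | by [] |].
  by move=> q' [<- | q't] //; apply: qmin.
have hP : subid h P.
  case: Hex => q [[<- //| qt] qP]; by exfalso; apply: nHt; exists q.
exists h; split; [by left | by [] |].
move=> q' [<- // | q't] q'h; exfalso; apply: nHt; exists q'; split => //.
by move=> r /q'h /hP.
Qed.

Lemma rad_ideal I : ideal I -> ideal (radical I).
Proof.
move=> iI; split.
- by exists 1%N; rewrite expr1; apply: id0.
- move=> a b [k Ha] [l Hb]; exists (k + l)%N; rewrite exprDn.
  apply: id_sum => // i; rewrite -mulr_natr; apply: idMr => //.
  have Hi := ltn_ord i.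
  case: (leqP l i) => Hli.
    have -> : b ^+ i = b ^+ (i - l) * b ^+ l by rewrite -exprD subnK.
    by apply: idM => //; apply: idM.
  have Hk : (k <= k + l - i)%N by lia.
  have -> : a ^+ (k + l - i) = a ^+ (k + l - i - k) * a ^+ k by rewrite -exprD subnK.
  by apply: idMr => //; apply: idM.
- by move=> r a [k Ha]; exists k; rewrite exprMn; apply: idM.
Qed.

End CA.

Section Dual.
Variable R : comNzRingType.
Variable N : lmodType R.

Lemma dual0 (f : N -> R) : dual_elt f -> f 0 = 0.
Proof.
move=> df; have := df 1 0 0; rewrite scaler0 addr0 mul1r => H.
by apply: (addrI (f 0)); rewrite addr0 -H.
Qed.
Lemma dualZ (f : N -> R) r u : dual_elt f -> f (r *: u) = r * f u.
Proof. by move=> df; have := df r u 0; rewrite addr0 dual0 // addr0. Qed.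
Lemma dualD (f : N -> R) u v : dual_elt f -> f (u + v) = f u + f v.
Proof. by move=> df; have := df 1 u v; rewrite scale1r mul1r. Qed.
Lemma dual_sum (f : N -> R) n (r : 'I_n -> R) (ys : 'I_n -> N) : dual_elt f ->
  f (\sum_(i < n) r i *: ys i) = \sum_(i < n) r i * f (ys i).
Proof.
move=> df; rewrite (big_morph f (fun u v => dualD u v df) (dual0 df)).
by apply: eq_bigr => i _; rewrite dualZ.
Qed.

Lemma oi_ideal (x : N) : ideal (order_ideal x).
Proof.
split.
- exists (fun _ => 0); split => //; move=> r u v; ring.
- move=> a b [f [df ->]] [g [dg ->]]; exists (fun z => f z + g z); split => //.
  move=> r u v; rewrite df dg; ring.
- move=> r a [f [df ->]]; exists (fun z => r * f z); split => //.
  move=> c u v; rewrite df; ring.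
Qed.

End Dual.

Theorem proposition5p1 (R : comNzRingType) (N : lmodType R) (n : nat)
    (ys : 'I_n -> N) (x y : N) :
  noetherian R ->
  (forall z : N, exists r : 'I_n -> R, z = \sum_(i < n) r i *: ys i) ->
  (ht_ge (order_ideal_quot y x) (order_ideal x) 2 ->
     subid (order_ideal y) (radical (order_ideal x))) /\
  ((forall i : 'I_n, ht_ge (order_ideal_quot (ys i) x) (order_ideal x) 2) ->
     (forall a : R, radical (trace_ideal N) a <-> radical (order_ideal x) a) /\
     (~ (forall a : R, trace_ideal N a) ->
        forall m : nat, is_mu_dual N m -> ht_le (@zero_ideal R) (trace_ideal N) m)).
Proof.
move=> noeth span.
have oid := oi_ideal x.
have [l [Hl Rl]] := fd noeth oid.
have Lmin : forall q, List.In q l -> (forall q', List.In q' l -> subid q' q -> subid q q') ->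
    forall T, prime_ideal T -> subid (order_ideal x) T -> subid T q -> subid q T.
  move=> q ql qmin T pT sT sTq.
  have [q2 [q2l q2T]] := fd_below Hl Rl pT sT.
  move=> r qr; apply: (q2T); apply: (qmin q2 q2l) => //.
  by move=> z /q2T /sTq.
have part1 : forall y, ht_ge (order_ideal_quot y x) (order_ideal x) 2 ->
    subid (order_ideal y) (radical (order_ideal x)).
  move=> y0 Hht a [f [df ->]]; apply: NNPP => nrad.
  have [q [ql nqf]] : exists q, List.In q l /\ ~ q (f y0).
    apply: NNPP => H; apply: nrad; apply: Rl => q ql.
    by apply: NNPP => nq; apply: H; exists q.
  have [q' [q'l q'q q'min]] := list_min (P := q) (ex_intro _ q (conj ql (fun r h => h))).
  have [pq' sq'] := Hl q' q'l.
  have nq'f : ~ q' (f y0) by move=> /q'q.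
  have M := Lmin q' q'l q'min.
  have [p [pp s0 st eP]] := Hht q' pq' sq'.
  have [s01 ex01] := st 0%N isT.
  have [s12 [e [p2e np1e]]] := st 1%N isT.
  apply: (pit noeth (pp 0%N isT) (pp 1%N isT) pq' s01 ex01).
  - by move=> r /s12 /eP.
  - by exists e; split => //; apply/eP.
  - by apply: sq'; exists f.
  move=> T pT sp0T Tfx sTq'; apply: M => // b [g [dg ->]].
  pose h := fun z => f y0 * g z - g y0 * f z.
  have dh : dual_elt h by move=> r u v; rewrite /h df dg; ring.
  have hy : h y0 = 0 by rewrite /h mulrC subrr.
  have Thx : T (h x) by apply: sp0T; apply: s0; exists h.
  have : T (f y0 * g x).
    have -> : f y0 * g x = h x + g y0 * f x by rewrite /h; ring.
    by apply: idD (prI pT) Thx _; apply: idM (prI pT) Tfx.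
  by case/(prM pT) => // /sTq'.
split; first exact: part1.
move=> Hall.
have rid := rad_ideal oid.
have trrad : subid (trace_ideal N) (radical (order_ideal x)).
  move=> a [k [f [z [df ->]]]]; apply: id_sum => // i.
  have [r ->] := span (z i); rewrite dual_sum //.
  apply: id_sum => // j; apply: idM => //.
  by apply: (part1 (ys j) (Hall j)); exists (f i).
have oitr : subid (order_ideal x) (trace_ideal N).
  move=> a [f [df ->]]; exists 1%N, (fun _ => f), (fun _ => x); split => //.
  by rewrite big_ord1.
have radeq : forall a, radical (trace_ideal N) a <-> radical (order_ideal x) a.
  move=> a; split.
    by move=> [k /trrad [l' H]]; exists (k * l')%N; rewrite exprM.
  by move=> [k H]; exists k; apply: oitr.
split => // ntr m [[g [dg Hg]] _] Hht.
have n1 : ~ radical (order_ideal x) 1.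
  move=> [k]; rewrite expr1n => -[f [df f1]]; apply: ntr => a.
  apply: oitr; exists (fun z => a * f z); split; last by rewrite -f1 mulr1.
  by move=> c u v; rewrite df; ring.
have [q [ql nq1]] : exists q, List.In q l /\ ~ q 1.
  apply: NNPP => H; apply: n1; apply: Rl => q ql.
  by apply: NNPP => nq; apply: H; exists q.
have [q' [q'l _ q'min]] := list_min (P := q) (ex_intro _ q (conj ql (fun r h => h))).
have [pq' sq'] := Hl q' q'l.
have M := Lmin q' q'l q'min.
have trq' : subid (trace_ideal N) q'.
  move=> a /trrad [k H]; exact: prX pq' (sq' _ H).
have iz : ideal (@zero_ideal R).
  split; rewrite /zero_ideal //.
  - by move=> a b -> ->; rewrite addr0.
  - by move=> r a ->; rewrite mulr0.
apply: (ght noeth (a := fun i => g i x) iz pq' _ _ (Hht q' pq' trq')).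
  apply: spanB_min; [exact: prI pq' | by move=> r ->; apply: id0 (prI pq') |].
  by move=> i; apply: sq'; exists (g i).
move=> T pT sT sTq'; apply: M => // b [f [df ->]].
have [r Hr] := Hg f df.
apply: sT; exists 0, r; split => //; by rewrite add0r Hr.
Qed.
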